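(* Let $A\in\mathbb{R}^{n\times n}$, ${\mathbf w}\in\mathbb{R}^n$, $T>0$, and let $D$ be a linear differential operator in the time variable $t$ (for instance $\frac{\mathrm d}{\mathrm dt}$ or $\frac{\mathrm d^2}{\mathrm dt^2}$), acting componentwise on vector-valued functions. Let $\mathcal{V}_1\subseteq\dots\subseteq\mathcal{V}_m\subseteq\mathcal{V}_{m+1}\subseteq\mathbb{R}^n$ be nested subspaces with $d_i=\dim(\mathcal{V}_i)$ ($d_0=0$), such that ${\mathbf w}\in\mathcal{V}_1$ and $A\mathcal{V}_i\subseteq\mathcal{V}_{i+1}$ for all $i=1,\dots,m$. Let $\langle\cdot,\cdot\rangle_\ast$ be an inner product on $\mathcal{V}_{m+1}$ with induced norm $\|\cdot\|_\ast$, and let $U_{m+1}=[\mathcal{U}_1,\dots,\mathcal{U}_{m+1}]$, $\mathcal{U}_j\in\mathbb{R}^{n\times b_j}$, $b_j=d_j-d_{j-1}$, be a nested $\langle\cdot,\cdot\rangle_\ast$-orthonormal basis of $\mathcal{V}_{m+1}$, i.e. $U_i=[\mathcal{U}_1,\dots,\mathcal{U}_i]$ is a $\langle\cdot,\cdot\rangle_\ast$-orthonormal basis of $\mathcal{V}_i$ for each $i\le m+1$. Let ${\mathbf y}_m:[0,T]\to\mathcal{V}_m$ be a (sufficiently differentiable) function whose residual ${\mathbf r}_m(t):=-D{\mathbf y}_m(t)-A{\mathbf y}_m(t)+{\mathbf w}$ satisfies $\langle{\mathbf v},{\mathbf r}_m(t)\rangle_\ast=0$ for all ${\mathbf v}\in\mathcal{V}_m$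 and all $t\in[0,T]$, and write ${\mathbf y}_m(t)=U_m{\mathbf x}_m(t)$ with ${\mathbf x}_m:[0,T]\to\mathbb{R}^{d_m}$. Define $\boldsymbol{\beta}_m(t) = -\,\mathcal{U}_{m+1}^\ast A\,\mathcal{U}_m\,[{\mathbf x}_m(t)]_{d_{m-1}+1:d_m}$. Then for all $t\in[0,T]$, \[ \|{\mathbf r}_m(t)\|_\ast = \|\boldsymbol{\beta}_m(t)\|, \] where $\|\cdot\|$ is the Euclidean norm.
   Context: For a matrix $W=[{\mathbf w}_1,\dots,{\mathbf w}_k]$ with columns in $\mathcal{V}_{m+1}$, $W^\ast$ denotes the adjoint with respect to $\langle\cdot,\cdot\rangle_\ast$: it maps ${\mathbf x}\in\mathcal{V}_{m+1}$ to $(\langle{\mathbf w}_1,{\mathbf x}\rangle_\ast,\dots,\langle{\mathbf w}_k,{\mathbf x}\rangle_\ast)^{\top}$; so $\mathcal{U}_{m+1}^\ast A\,\mathcal{U}_m$ is the $b_{m+1}\times b_m$ matrix with entries $\langle{\mathbf u},A{\mathbf u}'\rangle_\ast$ for columns ${\mathbf u}$ of $\mathcal{U}_{m+1}$ and ${\mathbf u}'$ of $\mathcal{U}_m$. For a vector ${\mathbf v}$, $[{\mathbf v}]_{i:j}$ denotes the subvector of entries $i,\dots,j$. *)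

(* Defs.v *)
From HB Require Import structures.
From mathcomp Require Import all_boot all_order all_algebra.
From mathcomp Require Import all_classical all_reals all_analysis.
Set Implicit Arguments. Unset Strict Implicit. Unset Printing Implicit Defensive.
Import Order.TTheory GRing.Theory Num.Theory.
Import numFieldNormedType.Exports.
Local Open Scope ring_scope.

Definition diff_op (R : realType) (n : nat) (K : nat) (c : nat -> R -> R)
    (f : R -> 'cV[R]_n) (t : R) : 'cV[R]_n :=
  \sum_(k < K.+1) c k t *: derive1n k f t.

(* ip is an inner product on the subspace W of R^n: symmetric, bilinear and
   positive definite on W (its values outside W are irrelevant). *)
Definition inner_product_on (R : realType) (n : nat)
    (W : {vspace 'cV[R]_n}) (ip : 'cV[R]_n -> 'cV[R]_n -> R) : Prop :=
  [/\ (forall x y, x \in W -> y \in W -> ip x y = ip y x),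
      (forall a x y z, x \in W -> y \in W -> z \in W ->
          ip (a *: x + y) z = a * ip x z + ip y z)
    & (forall x, x \in W -> x != 0 -> 0 < ip x x)].

Definition ip_norm (R : realType) (n : nat) (ip : 'cV[R]_n -> 'cV[R]_n -> R)
    (x : 'cV[R]_n) : R := Num.sqrt (ip x x).

(* Main.v *)
Require Import Defs.
From HB Require Import structures.
From mathcomp Require Import all_boot all_order all_algebra.
From mathcomp Require Import all_classical all_reals all_analysis.
Import Order.TTheory GRing.Theory Num.Theory.
Import numFieldNormedType.Exports.
Local Open Scope ring_scope.


Lemma cont_sum (R : realType) (T : topologicalType) (V : normedModType R) (I : Type) (r : seq I) (P : pred I) (F : I -> T -> V) : (forall i, continuous (F i)) -> continuous (fun x => \sum_(i <- r | P i) F i x).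
Proof.
move=> cF; elim: r => [|i r IH].
  have -> : (fun x => \sum_(i <- [::] | P i) F i x) = fun=> 0 by apply/funext => x; rewrite big_nil.
  exact: cst_continuous.
have -> : (fun x => \sum_(j <- i :: r | P j) F j x) = fun x => (if P i then F i x else 0) + \sum_(j <- r | P j) F j x.
  by apply/funext => x; rewrite big_cons; case: (P i); rewrite ?add0r.
move=> x; apply: continuousD; last exact: IH.
case: (P i); first exact: cF.
exact: cst_continuous.
Qed.
Section S.
Local Open Scope classical_set_scope.
Variable R : realType.
Variable n : nat.

Lemma vs_closed (S : {vspace 'cV[R]_n}) : closed [set v : 'cV[R]_n | v \in S].
Proof.
have -> : [set v : 'cV[R]_n | v \in S] = (fun v => projv S v - v) @^-1` [set 0].
  apply/seteqP; split => v /=.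
    by move=> vS; rewrite projv_id // subrr.
  by move/eqP; rewrite subr_eq0 => /eqP <-; exact: memv_proj.
apply: preimage_closed; last exact/accessible_closed_set1/hausdorff_accessible/norm_hausdorff.
move=> v _; apply: continuousB; last exact: cvg_id.
have E: (projv S : 'cV[R]_n -> 'cV[R]_n) = fun v : 'cV[R]_n => \sum_i \sum_j v i j *: projv S (delta_mx i j).
  apply/funext => v0; rewrite {1}(matrix_sum_delta v0) !linear_sum; apply: eq_bigr => i _.
  by rewrite linear_sum; apply: eq_bigr => j _; rewrite linearZ.
rewrite E; move: v; apply: cont_sum => i; apply: cont_sum => j x0.
apply: continuousZr_tmp; exact: coord_continuous.
Qed.

Lemma derive_in_vs (S : {vspace 'cV[R]_n}) (f : R -> 'cV[R]_n) T t :
  0 < T -> (forall s, 0 <= s <= T -> f s \in S) -> 0 <= t <= T ->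
  derivable f t 1 -> derive1 f t \in S.
Proof.
move=> T0 fS /andP[t0 tT] df.
have q : (fun h => h^-1 *: (f (h + t) - f t)) @ 0^' --> derive1 f t.
  rewrite derive1E.
  have -> : (fun h => h^-1 *: (f (h + t) - f t)) = (fun h => h^-1 *: ((f \o shift t) (h *: 1) - f t)).
    by apply/funext => h /=; rewrite /GRing.scale /= mulr1.
  exact: df.
have subr : ((0:R)^'+ : set_system R) `=>` (0:R)^'.
  move=> A; rewrite /= /dnbhs /within /= => hA; move: hA; apply: filterS => h Ah hpos.
  by apply: Ah; rewrite gt_eqF.
have subl : ((0:R)^'- : set_system R) `=>` (0:R)^'.
  move=> A; rewrite /= /dnbhs /within /= => hA; move: hA; apply: filterS => h Ah hpos.
  by apply: Ah; rewrite lt_eqF.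
have qr : (fun h => h^-1 *: (f (h + t) - f t)) @ 0^'+ --> derive1 f t.
  by apply: cvg_trans q; apply: cvg_app.
have ql : (fun h => h^-1 *: (f (h + t) - f t)) @ 0^'- --> derive1 f t.
  by apply: cvg_trans q; apply: cvg_app.
have mem h : 0 <= h + t <= T -> h^-1 *: (f (h + t) - f t) \in S.
  by move=> ht; apply: memvZ; apply: memvB; apply: fS => //; rewrite t0 tT.
case: (ltrP t T) => tT'.
  apply: (closed_cvg _ (vs_closed S) _ _ qr).
  near=> h; apply: mem.
  have h0 : 0 < h by near: h; exact: nbhs_right_gt.
  have h1 : h < T - t by near: h; apply: nbhs_right_lt; rewrite subr_gt0.
  apply/andP; split; first by rewrite addr_ge0 // ltW.
  by rewrite -lerBrDr ltW.
have tE : t = T by apply/eqP; rewrite eq_le tT tT'.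
apply: (closed_cvg _ (vs_closed S) _ _ ql).
near=> h; apply: mem.
have h0 : h < 0 by near: h; exact: nbhs_left_lt.
have h1 : - T < h by near: h; apply: nbhs_left_gt; rewrite oppr_lt0.
apply/andP; split; last by rewrite tE -lerBrDr subrr ltW.
by rewrite tE -lerBlDr sub0r ltW.
Unshelve. all: by end_near. Qed.
End S.
Section IP.
Variables (R : realType) (n : nat) (W : {vspace 'cV[R]_n}) (ip : 'cV[R]_n -> 'cV[R]_n -> R).
Hypothesis ipsym : forall {x y}, x \in W -> y \in W -> ip x y = ip y x.
Hypothesis iplin : forall a {x y z}, x \in W -> y \in W -> z \in W ->
          ip (a *: x + y) z = a * ip x z + ip y z.

Lemma ip0l z : z \in W -> ip 0 z = 0.
Proof.
move=> zW; have := @iplin 1 0 0 z (mem0v W) (mem0v W) zW.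
by rewrite scaler0 addr0 mul1r => h; apply: (addrI (ip 0 z)); rewrite -h addr0.
Qed.

Lemma ipDl x y z : x \in W -> y \in W -> z \in W -> ip (x + y) z = ip x z + ip y z.
Proof. by move=> xW yW zW; rewrite -{1}[x]scale1r iplin // mul1r. Qed.

Lemma ipZl a x z : x \in W -> z \in W -> ip (a *: x) z = a * ip x z.
Proof. by move=> xW zW; rewrite -[a *: x]addr0 iplin ?mem0v // ip0l // addr0. Qed.

Lemma ipDr x y z : x \in W -> y \in W -> z \in W -> ip z (x + y) = ip z x + ip z y.
Proof. by move=> xW yW zW; rewrite ipsym ?memvD // ipDl // -!(ipsym zW). Qed.

Lemma ipNr x z : x \in W -> z \in W -> ip z (- x) = - ip z x.
Proof.
move=> xW zW; rewrite ipsym ?memvN // -scaleN1r ipZl // (ipsym xW zW).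
by rewrite mulN1r.
Qed.

Lemma ip_suml I (r : seq I) (a : I -> R) f z : (forall i, f i \in W) -> z \in W ->
  ip (\sum_(i <- r) a i *: f i) z = \sum_(i <- r) a i * ip (f i) z.
Proof.
move=> fW zW; elim: r => [|i r IH]; first by rewrite !big_nil ip0l.
rewrite !big_cons iplin // ?IH //.
by apply: memv_suml => j _; apply: memvZ.
Qed.

Lemma ip_sumr I (r : seq I) (a : I -> R) f z : (forall i, f i \in W) -> z \in W ->
  ip z (\sum_(i <- r) a i *: f i) = \sum_(i <- r) a i * ip z (f i).
Proof.
move=> fW zW; rewrite ipsym //; last by apply: memv_suml => j _; apply: memvZ.
by rewrite ip_suml //; apply: eq_bigr => i _; rewrite ipsym.
Qed.
End IP.

Theorem corollary3p2 (R : realType) (n : nat) (A : 'M[R]_n) (w : 'cV[R]_n)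
    (T : R) (K : nat) (c : nat -> R -> R)
    (m : nat) (V : nat -> {vspace 'cV[R]_n})
    (ip : 'cV[R]_n -> 'cV[R]_n -> R)
    (u : nat -> 'cV[R]_n)
    (y : R -> 'cV[R]_n) (x : R -> nat -> R) :
  let d := fun i : nat => if i is 0 then 0%N else \dim (V i) in
  0 < T ->
  (1 <= m)%N ->
  (forall i, (1 <= i <= m)%N -> (V i <= V i.+1)%VS) ->
  w \in V 1 ->
  (forall i v, (1 <= i <= m)%N -> v \in V i -> A *m v \in V i.+1) ->
  inner_product_on (V m.+1) ip ->
  (* u 0, ..., u (d (m+1) - 1) are the columns of U_{m+1}; they are
     ip-orthonormal, and the first d i of them form a basis of V i *)
  (forall k l, (k < d m.+1)%N -> (l < d m.+1)%N ->
     ip (u k) (u l) = (if k == l then 1 else 0)) ->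
  (forall i, (1 <= i <= m.+1)%N -> basis_of (V i) [seq u k | k <- iota 0 (d i)]) ->
  (* y_m : [0,T] -> V_m, sufficiently differentiable for D *)
  (forall t, 0 <= t <= T -> y t \in V m) ->
  (forall k t, (k < K)%N -> 0 <= t <= T -> derivable (derive1n k y) t 1) ->
  (* Galerkin condition on the residual *)
  (forall t v, 0 <= t <= T -> v \in V m ->
     ip v (- diff_op K c y t - A *m y t + w) = 0) ->
  (* y_m(t) = U_m x_m(t) *)
  (forall t, 0 <= t <= T -> y t = \sum_(k < d m) x t k *: u k) ->
  forall t, 0 <= t <= T ->
    let r := - diff_op K c y t - A *m y t + w in
    (* beta_m(t)_l = - (U_{m+1}^* A U_m [x_m(t)]_{d_{m-1}+1 : d_m})_l *)
    let beta := fun l : nat =>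
      - \sum_(d (m.-1) <= k < d m) ip (u l) (A *m u k) * x t k in
    ip_norm ip r = Num.sqrt (\sum_(d m <= l < d m.+1) beta l ^+ 2).
Proof.
move=> d T0 m1 Vinc w1 AV [ipsym iplin ippos] orth basis yV yder gal yx t tT r beta.
have ipDr' := @ipDr R n (V m.+1) ip ipsym iplin.
have ipNr' := @ipNr R n (V m.+1) ip ipsym iplin.
have ip_suml' := @ip_suml R n (V m.+1) ip iplin.
have ip_sumr' := @ip_sumr R n (V m.+1) ip ipsym iplin.
have dE : forall i, (0 < i)%N -> d i = \dim (V i) by case.
have chain : forall i j, (1 <= i)%N -> (i <= j)%N -> (j <= m.+1)%N -> (V i <= V j)%VS.
  move=> i j i1; elim: j => [|j IH] ij jm; first by move: i1; rewrite leqn0 in ij; rewrite (eqP ij).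
  move: ij; rewrite leq_eqVlt => /orP[/eqP -> | ij]; first exact: subvv.
  apply: subv_trans (IH ij (ltnW jm)) (Vinc j _).
  by rewrite (leq_trans i1 ij) -ltnS jm.
have dmono : forall i j, (i <= j)%N -> (j <= m.+1)%N -> (d i <= d j)%N.
  move=> [|i] j // ij jm; rewrite !dE //; last exact: leq_trans ij.
  by apply: dimvS; apply: chain.
have uV : forall i k, (1 <= i <= m.+1)%N -> (k < d i)%N -> u k \in V i.
  move=> i k im kd; have /andP[/eqP <- _] := basis i im.
  by apply: memv_span; apply/mapP; exists k => //; rewrite mem_iota.
have uW : forall k, (k < d m.+1)%N -> u k \in V m.+1.
  by move=> k; apply: uV; rewrite leqnn.
have fourier : forall i v, (1 <= i <= m.+1)%N -> v \in V i ->
    v = \sum_(k < d i) ip (u k) v *: u k.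
  move=> i v im vV.
  have /andP[/eqP sp _] := basis i im.
  set s := [seq u k | k <- iota 0 (d i)] in sp.
  rewrite -sp in vV.
  have E := @coord_span _ _ (size s) (in_tuple s) v vV.
  pose a k := oapp (fun j => coord (in_tuple s) j v) 0 (insub k : option 'I_(size s)).
  have Ev : v = \sum_(k < d i) a k *: u k.
    have sz : size s = d i by rewrite size_map size_iota.
    rewrite -sz {1}E; apply: eq_bigr => j _; rewrite /a valK /=.
    have jd : (j < d i)%N by rewrite -sz.
    by rewrite (nth_map 0%N) ?size_iota // (@nth_iota 0%N 0 (d i) j) // add0n.
  have dim_le : (d i <= d m.+1)%N by apply: dmono; case/andP: im.
  have ha : forall l, (l < d i)%N -> ip (u l) v = a l.
    move=> l ll; rewrite {1}Ev ip_sumr' //; last first.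
      by apply: uW; exact: leq_trans dim_le.
      by move=> k; apply: uW; exact: leq_trans (ltn_ord k) dim_le.
    rewrite (bigD1 (Ordinal ll)) //= orth ?eqxx ?mulr1 ?(leq_trans ll dim_le) //.
    rewrite big1 ?addr0 // => k kl.
    have kN : (k < d m.+1)%N := leq_trans (ltn_ord k) dim_le.
    have lN : (l < d m.+1)%N := leq_trans ll dim_le.
    rewrite orth // ifF ?mulr0 //.
    apply/negbTE; rewrite eq_sym; move: kl; apply: contra => /eqP e.
    by apply/eqP/val_inj.
  rewrite {1}Ev; apply: eq_bigr => k _; by rewrite ha.
have m1' : (1 <= m <= m.+1)%N by rewrite m1 leqnSn.
have orthm : forall v l, v \in V m -> (d m <= l < d m.+1)%N -> ip (u l) v = 0.
  move=> v l vV /andP[Ml lN].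
  rewrite (fourier m v m1' vV) ip_sumr' //; last first.
    by apply: uW.
    by move=> k; apply: uW; exact: leq_trans (ltn_ord k) (dmono _ _ (leqnSn m) (leqnn _)).
  rewrite big1 // => k _; rewrite orth //; last first.
    exact: leq_trans (ltn_ord k) (dmono _ _ (leqnSn m) (leqnn _)).
  have -> : (l == k) = false.
    by apply/negbTE; rewrite neq_ltn (leq_trans (ltn_ord k) Ml) orbT.
  by rewrite mulr0.
have DyV : diff_op K c y t \in V m.
  have H : forall k, (k <= K)%N -> forall s, 0 <= s <= T -> derive1n k y s \in V m.
    elim => [|k IH] kK s sT; first exact: yV.
    rewrite derive1nS; apply: (@derive_in_vs R n (V m) _ T s T0 _ sT).
      by move=> s' s'T; apply: IH => //; exact: ltnW.
    exact: yder.
  rewrite /diff_op; apply: memv_suml => k _; apply: memvZ; apply: H => //.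
  by rewrite -ltnS ltn_ord.
have VmW : (V m <= V m.+1)%VS by apply: Vinc; rewrite m1 leqnn.
have wVm : w \in V m by apply: (subvP (chain 1 m (leqnn 1) m1 (leqnSn m))).
have AyW : A *m y t \in V m.+1 by apply: AV; [rewrite m1 leqnn | exact: yV].
have DW : diff_op K c y t \in V m.+1 by exact: (subvP VmW).
have wW : w \in V m.+1 by exact: (subvP VmW).
have rW : r \in V m.+1 by rewrite /r memvD // memvB // memvN.
have coefz : forall l, (l < d m)%N -> ip (u l) r = 0.
  by move=> l lM; apply: gal => //; apply: uV.
have PM : (d m.-1 <= d m)%N by apply: dmono; [exact: leq_pred | exact: leqnSn].
have AuP : forall k, (k < d m.-1)%N -> A *m u k \in V m.
  move=> k; case E: m.-1 => [|p] //= kP.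
  have mE : m = p.+2 by rewrite -(prednK m1) E.
  rewrite mE; apply: AV; first by rewrite mE /= leqnSn.
  apply: uV => //; by rewrite mE /= (leq_trans (leqnSn _) (leqnSn _)).
have coefb : forall l, (d m <= l < d m.+1)%N -> ip (u l) r = beta l.
  move=> l lMN; have lN : (l < d m.+1)%N by case/andP: lMN.
  have ulW := uW l lN.
  have AuW : forall k : 'I_(d m), A *m u k \in V m.+1.
    move=> k; apply: AV; first by rewrite m1 leqnn.
    by apply: uV.
  rewrite /r ipDr' ?memvB ?memvN // ipDr' ?memvN // !ipNr' //.
  rewrite (orthm _ _ DyV lMN) (orthm _ _ wVm lMN).
  rewrite yx // mulmx_sumr.
  under eq_bigr do rewrite -scalemxAr.
  rewrite ip_sumr' //.
  rewrite -(big_mkord xpredT (fun k => x t k * ip (u l) (A *m u k))).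
  rewrite (big_cat_nat (leq0n _) PM) /=.
  have -> : \sum_(0 <= k < d m.-1) x t k * ip (u l) (A *m u k) = 0.
    rewrite big_nat_cond big1 // => k /andP[/andP[_ kP] _].
    by rewrite (orthm _ _ (AuP k kP) lMN) mulr0.
  rewrite add0r.
  rewrite /beta oppr0 sub0r addr0; congr (- _).
  by apply: eq_bigr => k _; rewrite mulrC.
rewrite /ip_norm; congr Num.sqrt.
rewrite {1}(fourier m.+1 r _ rW) ?leqnn // ip_suml' //; last first.
  by move=> k; apply: uW.
rewrite -(big_mkord xpredT (fun k => ip (u k) r * ip (u k) r)).
rewrite (big_cat_nat (leq0n (d m)) (dmono _ _ (leqnSn m) (leqnn _))) /=.
have -> : \sum_(0 <= k < d m) ip (u k) r * ip (u k) r = 0.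
  rewrite big_nat_cond big1 // => k /andP[/andP[_ kM] _].
  by rewrite coefz // mulr0.
rewrite add0r.
apply: eq_big_nat => l lMN; by rewrite coefb // expr2.
Qed.
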